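(* Let $G=(V,E,L)$ be a hypergraph with loops. Then the set of extreme points of $\mathrm{PP}(G)$ is $$\mathcal{Q}=\Big\{z\in\mathbb{R}^{V\cup E\cup L}: z_i\in[0,1]\ \forall i\in V \text{ with }\{i,i\}\in L^+,\ z_i\in\{0,1\}\ \forall i\in V\text{ with }\{i,i\}\notin L^+,\ z_e=\prod_{k\in e}z_k\ \forall e\in E,\ z_{ii}=z_i^2\ \forall\{i,i\}\in L\Big\}.$$
   Context: A hypergraph with loops is $G=(V,E,L)$: $V$ a finite node set, $E$ a set of subsets of $V$ of cardinality at least two, $L$ a set of loops $\{i,i\}$, $i\in V$, partitioned as $L=L^-\cup L^+$ (minus/plus loops). $\mathrm{PP}(G):=\mathrm{conv}\{z\in\mathbb{R}^{V\cup E\cup L}: z_{ii}\ge z_i^2\ \forall\{i,i\}\in L^+,\ z_{ii}\le z_i^2\ \forall \{i,i\}\in L^-,\ z_e=\prod_{i\in e}z_i\ \forall e\in E,\ z_i\in[0,1]\ \forall i\in V\}$. *)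

(* Defs.v *)
From HB Require Import structures.
From mathcomp Require Import all_boot all_order all_algebra.
From mathcomp Require Import reals.
Set Implicit Arguments. Unset Strict Implicit. Unset Printing Implicit Defensive.
Import Order.TTheory GRing.Theory Num.Theory.
Local Open Scope ring_scope.

(* A hypergraph with loops on node set V : finType is given by
   E : {set {set V}} (edges, each of cardinality >= 2) and the loops
   L = L^- ∪ L^+, a loop {i,i} being identified with the node i;
   Lm, Lp : {set V} are the nodes carrying a minus/plus loop (disjoint). *)

Definition hyp_with_loops (V : finType) (E : {set {set V}}) (Lm Lp : {set V}) : Prop :=
  (forall e, e \in E -> 2 <= #|e|)%N /\ [disjoint Lm & Lp].

Definition hl_coord (V : finType) (E : {set {set V}}) (Lm Lp : {set V}) : Type :=
  (V + {e : {set V} | e \in E} + {i : V | i \in Lm :|: Lp})%type.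

Section Defs.
Variables (R : realType) (V : finType) (E : {set {set V}}) (Lm Lp : {set V}).
Local Notation C := (hl_coord E Lm Lp).

Definition zV (z : C -> R) (i : V) : R := z (inl (inl i)).
Definition zE (z : C -> R) (e : {e : {set V} | e \in E}) : R := z (inl (inr e)).
Definition zL (z : C -> R) (l : {i : V | i \in Lm :|: Lp}) : R := z (inr l).

Definition PP_set (z : C -> R) : Prop :=
  (forall l : {i : V | i \in Lm :|: Lp}, val l \in Lp -> zL z l >= zV z (val l) ^+ 2) /\
  (forall l : {i : V | i \in Lm :|: Lp}, val l \in Lm -> zL z l <= zV z (val l) ^+ 2) /\
  (forall e : {e : {set V} | e \in E}, zE z e = \prod_(k in val e) zV z k) /\
  (forall i : V, 0 <= zV z i <= 1).

End Defs.

Definition conv (R : realType) (C : Type) (S : (C -> R) -> Prop) (z : C -> R) : Prop :=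
  exists (n : nat) (lam : 'I_n -> R) (p : 'I_n -> C -> R),
    (forall j, 0 <= lam j) /\ \sum_(j < n) lam j = 1 /\ (forall j, S (p j)) /\
    (forall c, z c = \sum_(j < n) lam j * p j c).

Definition extreme_point (R : realType) (C : Type) (K : (C -> R) -> Prop) (z : C -> R) : Prop :=
  K z /\ forall (x y : C -> R) (t : R), K x -> K y -> 0 < t < 1 ->
    (forall c, z c = t * x c + (1 - t) * y c) -> x = z /\ y = z.

Definition PP (R : realType) (V : finType) (E : {set {set V}}) (Lm Lp : {set V}) :=
  conv (@PP_set R V E Lm Lp).

Definition Qset (R : realType) (V : finType) (E : {set {set V}}) (Lm Lp : {set V})
    (z : hl_coord E Lm Lp -> R) : Prop :=
  (forall i : V, i \in Lp -> 0 <= zV z i <= 1) /\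
  (forall i : V, i \notin Lp -> zV z i = 0 \/ zV z i = 1) /\
  (forall e : {e : {set V} | e \in E}, zE z e = \prod_(k in val e) zV z k) /\
  (forall l : {i : V | i \in Lm :|: Lp}, zL z l = zV z (val l) ^+ 2).

(* Main.v *)
Require Import Defs.
From HB Require Import structures.
From mathcomp Require Import all_boot all_order all_algebra.
From mathcomp Require Import reals.
From mathcomp Require Import ring lra.
From Stdlib Require Import FunctionalExtensionality.
Set Implicit Arguments. Unset Strict Implicit. Unset Printing Implicit Defensive.
Import Order.TTheory GRing.Theory Num.Theory.
Local Open Scope ring_scope.

Lemma var_id (R : realType) n (a f : 'I_n -> R) : \sum_j a j = 1 ->
  \sum_j a j * (f j - \sum_k a k * f k)^+2 =
  \sum_j a j * f j ^+ 2 - (\sum_k a k * f k)^+2.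
Proof.
move=> Ha; set w := \sum_k a k * f k.
transitivity (\sum_j (a j * f j ^+2 - (2 * w) * (a j * f j) + w^+2 * a j)).
  by apply: eq_bigr => j _; ring.
rewrite big_split /= sumrB -!mulr_sumr Ha -/w; ring.
Qed.

Lemma conv1 (R : realType) (C : Type) (S : (C -> R) -> Prop) w : S w -> conv S w.
Proof.
move=> Sw; exists 1%N, (fun _ => 1), (fun _ => w); split; first by move=> _; exact: ler01.
split; first by rewrite big_ord1.
split; first by [].
by move=> c; rewrite big_ord1 mul1r.
Qed.

Lemma extreme_in (R : realType) (C : Type) (S : (C -> R) -> Prop) z :
  extreme_point (conv S) z -> S z.
Proof.
move=> [[n [lam [p [H0 [H1 [HS Hz]]]]]] Hext].
have [j Hj|Hn] := pickP (fun j => 0 < lam j); last first.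
  exfalso; have : \sum_(j < n) lam j = 0.
    apply: big1 => j _; apply/eqP; rewrite eq_le H0 andbT.
    by move: (Hn j) => /= /negbT; rewrite -leNgt.
  by rewrite H1 => /eqP; rewrite oner_eq0.
have Hj1 : lam j <= 1.
  rewrite -H1 (bigD1 j) //= lerDl; exact: sumr_ge0.
set s := lam j / 2.
have s0 : 0 < s by rewrite /s; lra.
have s1 : s < 1 by rewrite /s; lra.
pose mu k := (lam k - (if k == j then s else 0)) / (1 - s).
pose y c := \sum_(k < n) mu k * p k c.
have Hy : conv S y.
  exists n, mu, p; split.
    move=> k; rewrite /mu; apply: divr_ge0; last by lra.
    case: eqP => [->|_]; rewrite /s; move: (H0 j) (H0 k); lra.
  split; last by [].
  rewrite /mu -mulr_suml sumrB H1 (bigD1 j) //= eqxx big1 ?addr0.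
    by rewrite divff //; apply/eqP; lra.
  by move=> k /negbTE ->.
have := Hext (p j) y s (conv1 (HS j)) Hy.
case.
- by rewrite s0 s1.
- move=> c; rewrite Hz /y mulr_sumr.
  have -> : \sum_(k < n) lam k * p k c =
     \sum_(k < n) ((if k == j then s else 0) * p k c + (1 - s) * (mu k * p k c)).
    apply: eq_bigr => k _; rewrite /mu; field; apply/eqP; lra.
  rewrite big_split /= (bigD1 j) //= eqxx big1 ?addr0 //.
  by move=> k /negbTE ->; rewrite mul0r.
- by move=> <- _.
Qed.

Lemma ext_dir (R : realType) (C : Type) (K : (C -> R) -> Prop) z (d : C -> R) :
  extreme_point K z -> K (fun c => z c + (-1) * d c) -> K (fun c => z c + 1 * d c) ->
  forall c, d c = 0.
Proof.
move=> [_ Hext] Hx Hy c.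
have Ht : 0 < (2^-1 : R) < 1 by apply/andP; split; lra.
have Hc : forall c', z c' = 2^-1 * (z c' + (-1) * d c') + (1 - 2^-1) * (z c' + 1 * d c').
  by move=> c'; field.
have [Ex _] := Hext _ _ _ Hx Hy Ht Hc.
have := congr1 (fun f => f c) Ex => /=; lra.
Qed.

Lemma fwd (R : realType) (V : finType) (E : {set {set V}}) (Lm Lp : {set V})
  (HG : hyp_with_loops E Lm Lp) (z : hl_coord E Lm Lp -> R) :
  extreme_point (@PP R V E Lm Lp) z -> Qset z.
Proof.
move=> Hext.
have HS : PP_set z := extreme_in Hext.
case: (HS) => [Hp [Hm [He Hb]]].
have Hdis := HG.2.
have ext := ext_dir Hext.
split; [|split; [|split]].
- by move=> i _; exact: Hb.
- move=> i Hi; have := Hb i; set a := zV z i => /andP [a0 a1].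
  have [->|a0'] := eqVneq a 0; first by left.
  have [->|a1'] := eqVneq a 1; first by right.
  exfalso.
  have a0s : 0 < a by rewrite lt_neqAle eq_sym a0' a0.
  have a1s : a < 1 by rewrite lt_neqAle a1' a1.
  set ep := a * (1 - a).
  have ep0 : 0 < ep by rewrite /ep; apply: mulr_gt0 => //; lra.
  have Ea : z (inl (inl i)) = a by [].
  pose d : hl_coord E Lm Lp -> R := fun c => match c with
    | inl (inl k) => if k == i then ep else 0
    | inl (inr e) => if i \in val e then ep * \prod_(k in val e | k != i) z (inl (inl k)) else 0
    | inr l => if val l == i then 2 * a * ep else 0 end.
  have Hs : forall s : R, (s = 1 \/ s = -1) -> PP_set (fun c => z c + s * d c).
    move=> s Hs1; split; [|split; [|split]].
    + move=> l Hl; rewrite /zL /zV /=.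
      have Hne : (val l == i) = false by apply/eqP => Hli; move: Hi; rewrite -Hli Hl.
      rewrite Hne !mulr0 !addr0; exact: Hp.
    + move=> l Hl; rewrite /zL /zV /=.
      case: eqP => [Hli|_]; last by rewrite !mulr0 !addr0; exact: Hm.
      rewrite Hli ?eqxx Ea.
      have := Hm l Hl; rewrite /zL /zV /= Hli Ea => H.
      case: Hs1 => ->; nra.
    + move=> e; rewrite /zE /zV /=.
      have He' := He e; rewrite /zE /zV in He'.
      case: ifP => Hie.
      * have Hr : \prod_(k in val e | k != i) (z (inl (inl k)) + s * (if k == i then ep else 0))
               = \prod_(k in val e | k != i) z (inl (inl k)).
          by apply: eq_bigr => k /andP [_ /negbTE ->]; rewrite mulr0 addr0.
        rewrite He' !(bigD1 i Hie) /= eqxx Hr; ring.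
      * rewrite mulr0 addr0 He'; apply: eq_bigr => k Hk.
        case: eqP => [Hki|_]; last by rewrite mulr0 addr0.
        by rewrite -Hki Hk in Hie.
    + move=> k; rewrite /zV /=.
      case: eqP => [->|_]; last by rewrite mulr0 addr0; exact: Hb.
      rewrite Ea; case: Hs1 => ->; apply/andP; split; rewrite /ep; nra.
  have := ext d (conv1 (Hs _ (or_intror erefl))) (conv1 (Hs _ (or_introl erefl))) (inl (inl i)).
  rewrite /= eqxx => H; move: ep0; rewrite H; lra.
- exact: He.
- move=> l; have := valP l; rewrite in_setU => /orP [] Hl.
  + have Hl' : (val l \in Lp) = false := disjointFr Hdis Hl.
    pose d : hl_coord E Lm Lp -> R := fun c => match c with
      | inr l' => if l' == l then zV z (val l) ^+ 2 - zL z l else 0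
      | _ => 0 end.
    have Hs : forall s : R, (s = 1 \/ s = -1) -> PP_set (fun c => z c + s * d c).
      move=> s Hs1; split; [|split; [|split]].
      * move=> l' Hl'p; rewrite /zL /zV /=.
        case: eqP => [El|_]; first by rewrite El Hl' in Hl'p.
        rewrite !mulr0 !addr0; exact: Hp.
      * move=> l' Hl'm; rewrite /zL /zV /=.
        case: eqP => [->|_]; last by rewrite !mulr0 !addr0; exact: Hm.
        have := Hm l Hl; rewrite /zL /zV mulr0 addr0 => H.
        case: Hs1 => ->; lra.
      * move=> e; rewrite /zE /zV /= !mulr0 !addr0.
        under eq_bigr do rewrite addr0.
        exact: He e.
      * by move=> k; rewrite /zV /= mulr0 addr0; exact: Hb.
    have := ext d (conv1 (Hs _ (or_intror erefl))) (conv1 (Hs _ (or_introl erefl))) (inr l).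
    rewrite /= eqxx => H; lra.
  + have Hl' : (val l \in Lm) = false := disjointFl Hdis Hl.
    pose d : hl_coord E Lm Lp -> R := fun c => match c with
      | inr l' => if l' == l then zL z l - zV z (val l) ^+ 2 else 0
      | _ => 0 end.
    have Hs : forall s : R, (s = 1 \/ s = -1) -> PP_set (fun c => z c + s * d c).
      move=> s Hs1; split; [|split; [|split]].
      * move=> l' Hl'p; rewrite /zL /zV /=.
        case: eqP => [->|_]; last by rewrite !mulr0 !addr0; exact: Hp.
        have := Hp l Hl; rewrite /zL /zV mulr0 addr0 => H.
        case: Hs1 => ->; lra.
      * move=> l' Hl'm; rewrite /zL /zV /=.
        case: eqP => [El|_]; first by rewrite El Hl' in Hl'm.
        rewrite !mulr0 !addr0; exact: Hm.
      * move=> e; rewrite /zE /zV /= !mulr0 !addr0.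
        under eq_bigr do rewrite addr0.
        exact: He e.
      * by move=> k; rewrite /zV /= mulr0 addr0; exact: Hb.
    have := ext d (conv1 (Hs _ (or_intror erefl))) (conv1 (Hs _ (or_introl erefl))) (inr l).
    rewrite /= eqxx => H; lra.
Qed.

Section Bwd.
Variables (R : realType) (V : finType) (E : {set {set V}}) (Lm Lp : {set V}).
Local Notation C := (hl_coord E Lm Lp).
Local Notation PPs := (@PP_set R V E Lm Lp).

Lemma conv_bounds (w : C -> R) : conv PPs w -> forall i, 0 <= zV w i <= 1.
Proof.
move=> [n [a [p [H0 [H1 [HS Hw]]]]]] i; rewrite /zV Hw; apply/andP; split.
  apply: sumr_ge0 => j _; apply: mulr_ge0 => //.
  by have := (HS j).2.2.2 i; rewrite /zV => /andP[].
rewrite -H1; apply: ler_sum => j _.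
have := (HS j).2.2.2 i; rewrite /zV => /andP[h1 h2]; have := H0 j; nra.
Qed.

Lemma conv_plus (w : C -> R) : conv PPs w ->
  forall l : {i : V | i \in Lm :|: Lp}, val l \in Lp -> zV w (val l) ^+ 2 <= zL w l.
Proof.
move=> [n [a [p [H0 [H1 [HS Hw]]]]]] l Hl; rewrite /zV /zL !Hw.
set f := fun j => p j (inl (inl (val l))).
have Hv := @var_id _ _ a f H1.
have : 0 <= \sum_j a j * (f j - \sum_k a k * f k)^+2.
  by apply: sumr_ge0 => j _; apply: mulr_ge0 => //; exact: sqr_ge0.
rewrite Hv.
have : \sum_j a j * f j ^+ 2 <= \sum_j a j * p j (inr l).
  apply: ler_sum => j _; apply: ler_wpM2l => //.
  by have := (HS j).1 l Hl; rewrite /zV /zL.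
rewrite /f /=; lra.
Qed.

Lemma conv_minus (w : C -> R) : conv PPs w ->
  forall l : {i : V | i \in Lm :|: Lp}, val l \in Lm -> zL w l <= zV w (val l).
Proof.
move=> [n [a [p [H0 [H1 [HS Hw]]]]]] l Hl; rewrite /zV /zL !Hw.
apply: ler_sum => j _; apply: ler_wpM2l => //.
have := (HS j).2.1 l Hl; have := (HS j).2.2.2 (val l); rewrite /zV /zL => /andP [h1 h2] h3.
nra.
Qed.

Lemma lemK (w : C -> R) n (a : 'I_n -> R) (p : 'I_n -> C -> R) :
  (forall j, 0 <= a j) -> \sum_j a j = 1 -> (forall c, w c = \sum_j a j * p j c) ->
  (forall i, \sum_j a j * (zV (p j) i) ^+ 2 <= zV w i ^+ 2) ->
  forall j, 0 < a j -> forall i, zV (p j) i = zV w i.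
Proof.
move=> H0 H1 Hw Hq j Hj i.
set f := fun j => zV (p j) i.
have Hv := @var_id _ _ a f H1.
have Ew : zV w i = \sum_k a k * f k by rewrite /zV Hw.
have Hge : forall k, 0 <= a k * (f k - \sum_k a k * f k)^+2.
  by move=> k; apply: mulr_ge0 => //; exact: sqr_ge0.
have Hs0 : \sum_k a k * (f k - \sum_k a k * f k)^+2 = 0.
  apply/eqP; rewrite eq_le sumr_ge0 ?andbT; last by move=> k _; exact: Hge.
  rewrite Hv -Ew; have := Hq i; rewrite /f; lra.
have := @psumr_eq0P _ _ _ _ (fun k _ => Hge k) Hs0 j isT.
rewrite -Ew /f /= => /eqP; rewrite mulf_eq0 (gt_eqF Hj) /= sqrf_eq0 subr_eq0 => /eqP //.
Qed.

Lemma half (HG : hyp_with_loops E Lm Lp) (z x y : C -> R) (t : R) :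
  Qset z -> conv PPs x -> conv PPs y -> 0 < t < 1 ->
  (forall c, z c = t * x c + (1 - t) * y c) -> x = z.
Proof.
move=> [Q1 [Q2 [Q3 Q4]]] Hx Hy /andP[t0 t1] Hz.
have Hdis := HG.2.
have tt : 0 < t * (1 - t) by apply: mulr_gt0; lra.
have HP : forall l : {i : V | i \in Lm :|: Lp}, val l \in Lp ->
    zV x (val l) = zV z (val l) /\ zL x l = zL z l.
  move=> l Hl.
  have hx := conv_plus Hx Hl; have hy := conv_plus Hy Hl; have hz := Q4 l.
  have hzi := Hz (inl (inl (val l))); have hzl := Hz (inr l).
  rewrite /zV /zL in hx hy hz *.
  set xi := x (inl (inl (val l))) in hx hzi *.
  set yi := y (inl (inl (val l))) in hy hzi *.
  set zi := z (inl (inl (val l))) in hz hzi *.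
  set xl := x (inr l) in hx hzl *.
  set yl := y (inr l) in hy hzl *.
  set zl := z (inr l) in hz hzl *.
  have key : t*(1-t)*(xi - yi)^+2 + t*(xl - xi^+2) + (1-t)*(yl - yi^+2) = 0.
    have : zl - zi^+2 = 0 by rewrite hz subrr.
    by rewrite hzi hzl => <-; ring.
  have sq : 0 <= (xi - yi)^+2 by exact: sqr_ge0.
  have B0 : 0 <= t*(xl - xi^+2) by apply: mulr_ge0; lra.
  have C0 : 0 <= (1-t)*(yl - yi^+2) by apply: mulr_ge0; lra.
  have A0 : 0 <= t*(1-t)*(xi - yi)^+2 by apply: mulr_ge0; lra.
  have A : t*(1-t)*(xi - yi)^+2 = 0 by lra.
  have B : t*(xl - xi^+2) = 0 by lra.
  have Exy : (xi - yi)^+2 = 0 by nra.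
  move/eqP: Exy; rewrite sqrf_eq0 subr_eq0 => /eqP Exy.
  have Ex : xl = xi ^+ 2 by nra.
  have Ezi : zi = xi by rewrite hzi -Exy; ring.
  by split; [rewrite Ezi | rewrite hz Ezi].
have HVx : forall i, zV x i = zV z i.
  move=> i; case: (boolP (i \in Lp)) => Hi.
    have hl : i \in Lm :|: Lp by rewrite in_setU Hi orbT.
    exact: (HP (exist _ i hl) Hi).1.
  have hzi := Hz (inl (inl i)).
  have := conv_bounds Hx i; have := conv_bounds Hy i.
  have := Q2 i Hi; rewrite /zV in hzi *.
  by case=> hq; rewrite hq in hzi *; move=> /andP [h1 h2] /andP [h3 h4]; nra.
have HLx : forall l, zL x l = zL z l.
  move=> l; have := valP l; rewrite in_setU => /orP [] Hl; last exact: (HP l Hl).2.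
  have Hl' : (val l \in Lp) = false := disjointFr Hdis Hl.
  have hx := conv_minus Hx Hl; have hy := conv_minus Hy Hl; have hz := Q4 l.
  have hzi := Hz (inl (inl (val l))); have hzl := Hz (inr l).
  have hxi := HVx (val l).
  have := Q2 (val l) (negbT Hl'); rewrite /zV /zL in hx hy hz hzi hzl hxi *.
  by case=> hq; rewrite hq in hz hxi hzi; nra.
case: (Hx) => [n [a [p [H0 [H1 [HS Hw]]]]]].
have K := lemK H0 H1 Hw.
have Hq : forall i, \sum_j a j * (zV (p j) i) ^+ 2 <= zV x i ^+ 2.
  move=> i; case: (boolP (i \in Lp)) => Hi.
    have hl : i \in Lm :|: Lp by rewrite in_setU Hi orbT.
    pose l := exist (fun i => i \in Lm :|: Lp) i hl.
    apply: (@le_trans _ _ (zL x l)).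
      rewrite /zL Hw; apply: ler_sum => j _; apply: ler_wpM2l => //.
      exact: (HS j).1 l Hi.
    by rewrite HLx Q4 HVx.
  apply: (@le_trans _ _ (zV x i)).
    rewrite {2}/zV Hw; apply: ler_sum => j _; apply: ler_wpM2l => //.
    have := (HS j).2.2.2 i; rewrite /zV => /andP [h1 h2]; rewrite /zV; nra.
  by rewrite HVx; case: (Q2 i Hi) => ->; rewrite ?expr1n ?expr0n.
have K' := K Hq.
apply: functional_extensionality => -[[i|e]|l]; [exact: HVx | | exact: HLx].
change (zE x e = zE z e).
rewrite Q3 /zE Hw.
transitivity (\sum_j a j * \prod_(k in val e) zV x k); last first.
  by rewrite -mulr_suml H1 mul1r; apply: eq_bigr => k _; exact: HVx.
apply: eq_bigr => j _.
have := H0 j; rewrite le_eqVlt => /orP [/eqP <-|Hj]; first by rewrite !mul0r.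
have := (HS j).2.2.1 e; rewrite /zE => ->; congr (_ * _).
by apply: eq_bigr => k _; exact: K'.
Qed.

End Bwd.

Theorem lemma2 (R : realType) (V : finType) (E : {set {set V}}) (Lm Lp : {set V})
  (HG : hyp_with_loops E Lm Lp) (z : hl_coord E Lm Lp -> R) :
  extreme_point (@PP R V E Lm Lp) z <-> Qset z.
Proof.
split; first exact: fwd.
move=> HQ; have HQ' := HQ; case: HQ' => [Q1 [Q2 [Q3 Q4]]].
have HzS : PP_set z.
  split; [|split; [|split]].
  - by move=> l _; rewrite Q4.
  - by move=> l _; rewrite Q4.
  - exact: Q3.
  - move=> i; case: (boolP (i \in Lp)) => Hi; first exact: Q1.
    by case: (Q2 i Hi) => ->; rewrite ?ler01 ?lexx.
split; first exact: conv1.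
move=> x y t Hx Hy Ht Hz; split; first exact: (half HG HQ Hx Hy Ht Hz).
apply: (half HG HQ Hy Hx (t := 1 - t)).
  by move: Ht => /andP [t0 t1]; apply/andP; split; lra.
by move=> c; rewrite Hz; ring.
Qed.
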